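(* For the hypergeometric weights described in the context and every $n\ge2$, the associated $\tau$-function satisfies $\tau^1_n=\vartheta\tau_n$.
   Context: Weights on $\mathbb N_0$: $w^{(a)}(k)=\frac{(b^{(a)}_1)_k\cdots(b^{(a)}_{M^{(a)}})_k}{(c_1)_k\cdots(c_N)_k}\frac{(\eta^{(a)})^k}{k!}$, $a\in\{1,2\}$, with parameters such that all series converge. The moment matrix $\mathscr M$ (indices from 0) has entries $\mathscr M_{n,2m}=\sum_k k^{n+m}w^{(1)}(k)$, $\mathscr M_{n,2m+1}=\sum_k k^{n+m}w^{(2)}(k)$, as functions of $(\eta^{(1)},\eta^{(2)})$. $\tau_n$ is the determinant of the leading principal $n\times n$ submatrix $\mathscr M^{[n]}$ (rows and columns $0,\dots,n-1$). The associated $\tau$-function $\tau^1_n$ is the determinant of the $n\times n$ matrix obtained from $\mathscr M^{[n]}$ by removing its row $(\mathscr M_{n-1,0},\dots,\mathscr M_{n-1,n-1})$ and appending as last row $(\mathscr M_{n,0},\dots,\mathscr M_{n,n-1})$. $\vartheta=\eta^{(1)}\partial/\partial\eta^{(1)}+\eta^{(2)}\partial/\partial\eta^{(2)}$. *)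

(* Defs.v *)
From mathcomp Require Import all_boot all_algebra.
From mathcomp Require Import Rstruct.
From Stdlib Require Import Reals.
From Coquelicot Require Import Coquelicot.

Set Implicit Arguments.
Unset Strict Implicit.
Unset Printing Implicit Defensive.

Fixpoint poch (x : R) (k : nat) : R :=
  match k with
  | O => 1%R
  | S k' => (poch x k' * (x + INR k'))%R
  end.

Definition prod_poch (ps : list R) (k : nat) : R :=
  List.fold_right (fun p acc => (poch p k * acc)%R) 1%R ps.

Definition hweight (bs cs : list R) (eta : R) (k : nat) : R :=
  (prod_poch bs k / prod_poch cs k * eta ^ k / INR (k`!))%R.

(* j-th moment  sum_k k^j w(k)  (with 0^0 = 1). *)
Definition moment (j : nat) (w : nat -> R) : R :=
  Series (fun k => (INR k ^ j * w k)%R).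

(* Moment matrix entries:
   M_{n,2m} = sum_k k^{n+m} w1(k),  M_{n,2m+1} = sum_k k^{n+m} w2(k). *)
Definition mom (b1 b2 cs : list R) (e1 e2 : R) (n j : nat) : R :=
  if odd j then moment (n + j./2) (hweight b2 cs e2)
  else moment (n + j./2) (hweight b1 cs e1).

Local Open Scope ring_scope.
Definition tau (b1 b2 cs : list R) (n : nat) (e1 e2 : R) : R :=
  (\det (\matrix_(i < n, j < n) mom b1 b2 cs e1 e2 i j)).

Definition tau1 (b1 b2 cs : list R) (n : nat) (e1 e2 : R) : R :=
  (\det (\matrix_(i < n, j < n)
          mom b1 b2 cs e1 e2 (if (i : nat) == n.-1 then n else i) j)).

Local Close Scope ring_scope.

Definition moments_converge_near (bs cs : list R) (eta : R) : Prop :=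
  exists r : R, (0 < r)%R /\
    forall eta' : R, (Rabs (eta' - eta) < r)%R ->
      forall j : nat, ex_series (fun k => (INR k ^ j * hweight bs cs eta' k)%R).

(* Main.v *)
Require Import Defs.
From mathcomp Require Import all_boot all_algebra.
From mathcomp Require Import Rstruct perm.
From Stdlib Require Import Reals Lra.
From Coquelicot Require Import Coquelicot.
Import GRing.Theory.

Lemma radius_ge (a : nat -> R) (x : R) :
  ex_series (fun n => (a n * x ^ n)%R) -> Rbar_le (Rabs x) (CV_radius a).
Proof.
move=> Hs.
have Hl := ex_series_lim_0 _ Hs.
have Habs : is_lim_seq (fun n => Rabs (a n * x ^ n)) 0%R.
  by apply -> (is_lim_seq_abs_0 (fun n => (a n * x ^ n)%R)).
have Hcv : Un_cv (fun n => Rabs (a n * x ^ n)) 0%R by apply -> is_lim_seq_Reals.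
have Hc : Cauchy_crit (fun n => Rabs (a n * x ^ n)).
  by apply: CV_Cauchy; exists 0%R.
case: (cauchy_bound _ Hc) => M HM.
case: (CV_radius_bounded a) => Hub _.
apply: Hub; exists M => n.
rewrite Rabs_mult RPow_abs Rabs_Rabsolu -Rabs_mult.
by apply: HM; exists n.
Qed.

Ltac req := match goal with |- ?a = ?b => change (@eq R a b) end; ring.

Definition coef (bs cs : list R) (j k : nat) : R :=
  (INR k ^ j * (prod_poch bs k / prod_poch cs k / INR (k`!)))%R.

Lemma moment_PS bs cs j x : moment j (hweight bs cs x) = PSeries (coef bs cs j) x.
Proof.
rewrite /moment /PSeries; apply: Series_ext => k.
rewrite /hweight /coef /Rdiv; ring.
Qed.

Definition dmom bs cs j e := PSeries (PS_derive (coef bs cs j)) e.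

Lemma moment_derive bs cs e j : moments_converge_near bs cs e ->
  is_derive (fun x => moment j (hweight bs cs x)) e (dmom bs cs j e) /\
     (e * dmom bs cs j e)%R = moment j.+1 (hweight bs cs e).
Proof.
case=> r [Hr Hc].
have Hex : forall y j', (Rabs (y - e) < r)%R -> ex_series (fun n => (coef bs cs j' n * y ^ n)%R).
  move=> y jj Hy; apply: (ex_series_ext _ _ _ (Hc y Hy jj)) => k.
  rewrite /hweight /coef /Rdiv; req.
have Hrad : Rbar_lt (Rabs e) (CV_radius (coef bs cs j)).
  pose y := if Rle_dec 0 e then (e + r/2)%R else (e - r/2)%R.
  have Hy : (Rabs (y - e) < r)%R.
    rewrite /y; destruct (Rle_dec 0 e); simpl; [rewrite Rabs_pos_eq | rewrite Rabs_left]; lra.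
  move: (radius_ge _ _ (Hex y j Hy)).
  destruct (CV_radius (coef bs cs j)) as [R0| |] => //= HR.
  apply: Rlt_le_trans HR.
  rewrite /y; destruct (Rle_dec 0 e) as [h|h]; simpl.
    rewrite !Rabs_pos_eq; lra.
  rewrite !Rabs_left; lra.
rewrite /dmom; split.
  apply: is_derive_ext; first by move=> t; rewrite moment_PS.
  exact: is_derive_PSeries.
rewrite moment_PS.
rewrite (PSeries_decr_1 (coef bs cs j.+1)); last first.
  apply/ex_pseries_R; apply: Hex; rewrite Rminus_diag Rabs_R0; lra.
have -> : coef bs cs j.+1 0 = 0%R by rewrite /coef /= Rmult_0_l Rmult_0_l.
rewrite Rplus_0_l; congr (e * _)%R.
apply: PSeries_ext => k.
rewrite /PS_decr_1 /PS_derive /coef /=; ring.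
Qed.

Local Open Scope ring_scope.

Lemma der_ext (f g : R -> R) x l : (forall t, f t = g t) -> is_derive f x l -> is_derive g x l.
Proof. exact: is_derive_ext. Qed.
Lemma der_const (a x : R) : is_derive (fun _ => a) x 0.
Proof. exact: (is_derive_const a x). Qed.
Lemma der_plus (f g : R -> R) x df dg : is_derive f x df -> is_derive g x dg ->
  is_derive (fun y => f y + g y) x (df + dg).
Proof. exact: is_derive_plus. Qed.
Lemma der_mult (f g : R -> R) x df dg : is_derive f x df -> is_derive g x dg ->
  is_derive (fun y => f y * g y) x (df * g x + f x * dg).
Proof. move=> Hf Hg; exact: (is_derive_mult f g x df dg Hf Hg Rmult_comm). Qed.
Lemma der_scal (k : R) (f : R -> R) x df : is_derive f x df ->
  is_derive (fun y => k * f y) x (k * df).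
Proof. exact: is_derive_scal. Qed.

Lemma is_derive_sum_seq (I : Type) (r : seq I) (P : pred I) (F : I -> R -> R) (dF : I -> R) x :
  (forall i, is_derive (F i) x (dF i)) ->
  is_derive (fun y => \sum_(i <- r | P i) F i y) x (\sum_(i <- r | P i) dF i).
Proof.
move=> H; elim: r => [|a r IH].
  rewrite big_nil; apply: (der_ext (fun _ => 0)) => [t|]; first by rewrite big_nil.
  exact: der_const.
rewrite big_cons; case Pa: (P a).
  apply: (der_ext (fun y => F a y + \sum_(i <- r | P i) F i y)) => [t|].
    by rewrite big_cons Pa.
  exact: der_plus.
apply: (der_ext (fun y => \sum_(i <- r | P i) F i y)) => [t|//].
by rewrite big_cons Pa.
Qed.

Lemma is_derive_prod n (F : nat -> R -> R) (dF : nat -> R) x :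
  (forall i, is_derive (F i) x (dF i)) ->
  is_derive (fun y => \prod_(i < n) F i y) x
    (\sum_(k < n) \prod_(i < n) (if i == k then dF i else F i x)).
Proof.
move=> H; elim: n => [|n IH].
  rewrite big_ord0; apply: (der_ext (fun _ => 1)) => [t|]; first by rewrite big_ord0.
  exact: der_const.
apply: (der_ext (fun y => (\prod_(i < n) F i y) * F n y)) => [t|].
  by rewrite big_ord_recr.
have -> : \sum_(k < n.+1) \prod_(i < n.+1) (if i == k then dF i else F i x)
   = (\sum_(k < n) \prod_(i < n) (if i == k then dF i else F i x)) * F n x
     + (\prod_(i < n) F i x) * dF n.
  rewrite big_ord_recr /= big_distrl; congr (_ + _).
    apply: eq_bigr => k _; rewrite big_ord_recr /=.
    have -> : (ord_max == widen_ord (leqnSn n) k) = false.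
      by apply/negbTE; rewrite neq_ltn /= ltn_ord orbT.
    congr (_ * _); apply: eq_bigr => i _; by [].
  rewrite big_ord_recr /= eqxx; congr (_ * _); apply: eq_bigr => i _.
  have -> : (widen_ord (leqnSn n) i == ord_max) = false.
    by apply/negbTE; rewrite neq_ltn /= ltn_ord.
  by [].
exact: der_mult.
Qed.

Lemma is_derive_det n (f : 'I_n.+1 -> 'I_n.+1 -> R -> R) (df : 'I_n.+1 -> 'I_n.+1 -> R) x :
  (forall i j, is_derive (f i j) x (df i j)) ->
  is_derive (fun y => \det (\matrix_(i, j) f i j y)) x
    (\sum_(k < n.+1) \det (\matrix_(i, j) if i == k then df i j else f i j x)).
Proof.
move=> H.
pose G (s : 'S_n.+1) (m : nat) (y : R) := f (inord m) (s (inord m)) y.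
pose dG (s : 'S_n.+1) (m : nat) := df (inord m) (s (inord m)).
apply: (der_ext (fun y => \sum_(s : 'S_n.+1) (-1) ^+ s * \prod_(i < n.+1) G s i y)).
  move=> t; rewrite /determinant; apply: eq_bigr => s _; congr (_ * _).
  by apply: eq_bigr => i _; rewrite mxE /G inord_val.
have -> : \sum_(k < n.+1) \det (\matrix_(i, j) if i == k then df i j else f i j x)
  = \sum_(s : 'S_n.+1) (-1) ^+ s * \sum_(k < n.+1) \prod_(i < n.+1) (if i == k then dG s i else G s i x).
  under [RHS]eq_bigr do rewrite big_distrr.
  rewrite [RHS]exchange_big; apply: eq_bigr => k _; rewrite /determinant.
  apply: eq_bigr => s _; congr (_ * _); apply: eq_bigr => i _.
  by rewrite !mxE /G /dG inord_val.
apply: (is_derive_sum_seq _ (index_enum ('S_n.+1)) xpredT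
   (fun s y => (-1) ^+ s * \prod_(i < n.+1) G s i y)
   (fun s => (-1) ^+ s * \sum_(k < n.+1) \prod_(i < n.+1) (if i == k then dG s i else G s i x)) x) => s.
apply: (der_scal _ (fun y => \prod_(i < n.+1) G s i y)).
apply: (is_derive_prod n.+1 (G s) (dG s) x) => m; exact: H.
Qed.

Lemma mom_scaled bs cs e j : moments_converge_near bs cs e ->
  e * dmom bs cs j e = moment j.+1 (hweight bs cs e).
Proof. move=> H; exact: (moment_derive _ _ _ j H).2. Qed.

Lemma mom_der1 b1 b2 cs e1 e2 (i j : nat) : moments_converge_near b1 cs e1 ->
  is_derive (fun x => mom b1 b2 cs x e2 i j) e1
    (if odd j then 0 else dmom b1 cs (i + j./2) e1).
Proof.
move=> H; rewrite /mom; case: (odd j); first exact: der_const.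
exact: (moment_derive _ _ _ _ H).1.
Qed.

Lemma mom_der2 b1 b2 cs e1 e2 (i j : nat) : moments_converge_near b2 cs e2 ->
  is_derive (fun y => mom b1 b2 cs e1 y i j) e2
    (if odd j then dmom b2 cs (i + j./2) e2 else 0).
Proof.
move=> H; rewrite /mom; case: (odd j); last exact: der_const.
exact: (moment_derive _ _ _ _ H).1.
Qed.

Local Close Scope ring_scope.

Theorem mainTheorem9 (b1 b2 cs : list R) (e1 e2 : R) (n : nat) :
  (2 <= n)%nat ->
  (forall c, List.In c cs -> forall k : nat, (c + INR k <> 0)%R) ->
  moments_converge_near b1 cs e1 ->
  moments_converge_near b2 cs e2 ->
  exists d1 d2 : R,
    is_derive (fun x => tau b1 b2 cs n x e2) e1 d1 /\
    is_derive (fun y => tau b1 b2 cs n e1 y) e2 d2 /\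
    tau1 b1 b2 cs n e1 e2 = (e1 * d1 + e2 * d2)%R.
Proof.
case: n => [//|m] Hn Hcs H1 H2.
Local Open Scope ring_scope.
pose A1 (k : 'I_m.+1) := \matrix_(i < m.+1, j < m.+1)
  (if i == k then (if odd j then 0 else dmom b1 cs (i + j./2) e1) else mom b1 b2 cs e1 e2 i j).
pose A2 (k : 'I_m.+1) := \matrix_(i < m.+1, j < m.+1)
  (if i == k then (if odd j then dmom b2 cs (i + j./2) e2 else 0) else mom b1 b2 cs e1 e2 i j).
pose B (k : 'I_m.+1) := \matrix_(i < m.+1, j < m.+1)
  mom b1 b2 cs e1 e2 (if i == k then (k.+1 : nat) else (i : nat)) j.
exists (\sum_(k < m.+1) \det (A1 k)), (\sum_(k < m.+1) \det (A2 k)).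
split.
  exact: (is_derive_det m (fun i j x => mom b1 b2 cs x e2 i j) _ e1
           (fun i j => mom_der1 b1 b2 cs e1 e2 i j H1)).
split.
  exact: (is_derive_det m (fun i j y => mom b1 b2 cs e1 y i j) _ e2
           (fun i j => mom_der2 b1 b2 cs e1 e2 i j H2)).
transitivity (\sum_(k < m.+1) \det (B k)).
  rewrite big_ord_recr /= big1 ?add0r.
    rewrite /tau1 /B; apply: f_equal; apply/matrixP => i j; rewrite !mxE.
    by [].
  move=> k _.
  apply: (@determinant_alternate _ _ _ (widen_ord (leqnSn m) k) (inord k.+1)).
    by rewrite -val_eqE /= inordK ?ltnS ?ltn_ord // (ltn_eqF (ltnSn k)).
  move=> j; rewrite !mxE eqxx.
  have -> : (inord k.+1 == widen_ord (leqnSn m) k) = false.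
    by rewrite -val_eqE /= inordK ?ltnS ?ltn_ord // eq_sym (ltn_eqF (ltnSn k)).
  by rewrite inordK ?ltnS ?ltn_ord.
have -> : forall a b c d : R, Rplus (Rmult a b) (Rmult c d) = a * b + c * d by [].
rewrite !big_distrr -big_split; apply: eq_bigr => k _.
apply: (determinant_multilinear (i0 := k)).
- apply/rowP => j; rewrite !mxE !eqxx /mom.
  case: (odd j).
    by rewrite mulr0 add0r (mom_scaled _ _ _ _ H2) addSn.
  by rewrite mulr0 addr0 (mom_scaled _ _ _ _ H1) addSn.
- by apply/matrixP => i j; rewrite !mxE eq_sym (negbTE (neq_lift k i)).
- by apply/matrixP => i j; rewrite !mxE eq_sym (negbTE (neq_lift k i)).
Qed.
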